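(* In the calculus $\mathcal{L}$ described in the context, a well-typed command $c$ (i.e. $c:A$ for some type $A$) reduces (there is $c'$ with $c\rightsquigarrow c'$) if and only if $c$ is not of the form $\langle v_t\mid\star\mid l\rangle^\varepsilon$ with $v_t$ a final value. The same holds in the ordered fragment, i.e. when all judgements $\vdash_p$ are required to be derived without the rule (struct).
   Context: Polarities are $\varepsilon\in\{+,-\}$. Types: positive $P,Q ::= R \mid 1 \mid A\otimes B \mid A\oplus B$; negative $N,M ::= A\multimap B \mid A\,\&\,B$; $\varpi(P)=+$, $\varpi(N)=-$ ($R$ is an atomic type of resources). Fix variables and resource constants $r_n$ ($n\in\mathbb N$). Expressions $t,u$ and values $v,w$: $t,u ::= v \mid (\mathrm{let}\ x^+=t\ \mathrm{in}\ u)^+ \mid (\mathrm{let}\ x^-=v\ \mathrm{in}\ u)^+ \mid \delta(v,(x,y).t)^+ \mid \delta(v,().t)^+ \mid \delta(v,x.t,y.u)^+ \mid (v\,w)^+ \mid (\pi_1 v)^+ \mid (\pi_2 v)^+$; $v,w ::= (\mathrm{let}\ x^+=t\ \mathrm{in}\ v)^- \mid (\mathrm{let}\ x^-=v\ \mathrm{in}\ w)^- \mid \delta(v,(x,y).w)^- \mid \delta(v,().w)^- \mid \delta(v,x.w,y.w')^- \mid (v\,w)^- \mid (\pi_1 v)^- \mid (\pi_2 v)^- \mid x \mid \mathrm{new} \mid \mathrm{delete} \mid (v,w) \mid () \mid \iota_1 v \mid \iota_2 v \mid \lambda x.t \mid \langle t,u\rangle \mid r_n$. Final values are $v_t ::=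 () \mid (v,w)\mid \iota_i v\mid r_n\mid\langle t,u\rangle\mid\lambda x.t\mid\mathrm{new}\mid\mathrm{delete}$. $t[v/x]$ is capture-avoiding substitution. Contexts are finite lists of typed variables. Typing rules ($v,w$ range over values): (var) $x:A\vdash x:A$. (struct) from $\Gamma\vdash t:A$ and a type-preserving bijection $\sigma$ from entries of $\Gamma$ to entries of $\Gamma'$ (permutation plus renaming) derive $\Gamma'\vdash t[\sigma]:A$. $\vdash\mathrm{new}:1\multimap(R\oplus 1)$; $\vdash\mathrm{delete}:R\multimap 1$. (let) from $\Delta\vdash t:A$, $\Gamma,x:A\vdash u:B$ derive $\Gamma,\Delta\vdash(\mathrm{let}\ x^{\varpi(A)}=t\ \mathrm{in}\ u)^{\varpi(B)}:B$. From $\Gamma\vdash v:A$, $\Delta\vdash w:B$ derive $\Gamma,\Delta\vdash(v,w):A\otimes B$; from $\Delta\vdash v:A\otimes B$, $\Gamma,x:A,y:B,\Gamma'\vdash t:C$ derive $\Gamma,\Delta,\Gamma'\vdash\delta(v,(x,y).t)^{\varpi(C)}:C$. $\vdash():1$; from $\Delta\vdash v:1$, $\Gamma,\Gamma'\vdash t:A$ derive $\Gamma,\Delta,\Gamma'\vdash\delta(v,().t)^{\varpi(A)}:A$. From $\Gamma\vdash v:A$ derive $\Gamma\vdash\iota_1v:A\oplus B$; from $\Gamma\vdash v:B$ derive $\Gamma\vdash\iota_2v:A\oplus B$; from $\Delta\vdash v:A\oplus B$, $\Gamma,x:A,\Gamma'\vdash t:C$, $\Gamma,y:B,\Gamma'\vdash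 u:C$ derive $\Gamma,\Delta,\Gamma'\vdash\delta(v,x.t,y.u)^{\varpi(C)}:C$. From $x:A,\Gamma\vdash t:B$ derive $\Gamma\vdash\lambda x.t:A\multimap B$; from $\Gamma\vdash w:A$, $\Delta\vdash v:A\multimap B$ derive $\Gamma,\Delta\vdash(v\,w)^{\varpi(B)}:B$. From $\Gamma\vdash t:A$, $\Gamma\vdash u:B$ derive $\Gamma\vdash\langle t,u\rangle:A\&B$; from $\Gamma\vdash v:A_1\&A_2$ derive $\Gamma\vdash(\pi_iv)^{\varpi(A_i)}:A_i$. $\vdash_p$ is generated by these rules plus the axioms $\vdash_p r_n:R$. Machine: stacks $s ::= \star \mid v^\varepsilon\cdot s \mid \pi_i^\varepsilon\cdot s \mid (x^+.u)^\varepsilon\cdot s$; lists $l ::= []\mid r_n::l$; commands $\langle t\mid s\mid l\rangle^\varepsilon$. Stack typing $s:A\vdash_p C$: $\star:A\vdash_p A$; if $s:B\vdash_p C$, $\varepsilon=\varpi(B)$ and $\vdash_p v:A$ then $v^\varepsilon\cdot s:A\multimap B\vdash_p C$; if $s:B\vdash_p C$, $\varepsilon=\varpi(B)$ and $x:A\vdash_p t:B$ then $(x^+.t)^\varepsilon\cdot s:A\vdash_p C$; if $s:A_i\vdash_p C$ and $\varepsilon=\varpi(A_i)$ then $\pi_i^\varepsilon\cdot s:A_1\&A_2\vdash_p C$. A command is typed, $\langle t\mid s\mid l\rangle^\varepsilon:A$, iff there is $B$ with $\varpi(B)=\varepsilon$, $\vdash_p t:B$ and $s:B\vdash_p A$.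 Reduction $\rightsquigarrow$ ($i\in\{1,2\}$): $\langle(\mathrm{let}\ x^-=v\ \mathrm{in}\ t)^\varepsilon\mid s\mid l\rangle^\varepsilon\rightsquigarrow\langle t[v/x]\mid s\mid l\rangle^\varepsilon$; $\langle(\mathrm{let}\ x^+=t\ \mathrm{in}\ u)^\varepsilon\mid s\mid l\rangle^\varepsilon\rightsquigarrow\langle t\mid (x^+.u)^\varepsilon\cdot s\mid l\rangle^+$; $\langle v\mid (x^+.t)^\varepsilon\cdot s\mid l\rangle^+\rightsquigarrow\langle t[v/x]\mid s\mid l\rangle^\varepsilon$; $\langle (v\,w)^\varepsilon\mid s\mid l\rangle^\varepsilon\rightsquigarrow\langle v\mid w^\varepsilon\cdot s\mid l\rangle^-$; $\langle \lambda x.t\mid v^\varepsilon\cdot s\mid l\rangle^-\rightsquigarrow\langle t[v/x]\mid s\mid l\rangle^\varepsilon$; $\langle (\pi_i v)^\varepsilon\mid s\mid l\rangle^\varepsilon\rightsquigarrow\langle v\mid \pi_i^\varepsilon\cdot s\mid l\rangle^-$; $\langle \langle t_1,t_2\rangle\mid \pi_i^\varepsilon\cdot s\mid l\rangle^-\rightsquigarrow\langle t_i\mid s\mid l\rangle^\varepsilon$; $\langle \delta((v,w),(x,y).t)^\varepsilon\mid s\mid l\rangle^\varepsilon\rightsquigarrow\langle t[v/x,w/y]\mid s\mid l\rangle^\varepsilon$; $\langle \delta((),().t)^\varepsilon\mid s\mid l\rangle^\varepsilon\rightsquigarrow\langle t\mid s\mid l\rangle^\varepsilon$; $\langle \delta(\iota_i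 v,x_1.t_1,x_2.t_2)^\varepsilon\mid s\mid l\rangle^\varepsilon\rightsquigarrow\langle t_i[v/x_i]\mid s\mid l\rangle^\varepsilon$; $\langle \mathrm{new}\mid ()^{\varepsilon}\cdot s\mid r_n::l\rangle^-\rightsquigarrow\langle \iota_1 r_n\mid s\mid l\rangle^+$; $\langle \mathrm{new}\mid ()^{\varepsilon}\cdot s\mid []\rangle^-\rightsquigarrow\langle \iota_2 ()\mid s\mid []\rangle^+$; $\langle \mathrm{delete}\mid r_n^{\varepsilon}\cdot s\mid l\rangle^-\rightsquigarrow\langle ()\mid s\mid r_n::l\rangle^+$.
   Formalization: Typing the stack frame $(x^+.t)^\varepsilon\cdot s:A\vdash_p C$ also needs $\varpi(A)=+$, and every typing rule that joins contexts demands that the resulting context list distinct variables. Apart from conventions, each condition added here is assumed in the paper as well or is needed for the statement above to hold. *)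

(* Defs.v *)
From Stdlib Require Import List Arith Permutation.
Import ListNotations.

Inductive pol : Type := Pos | Neg.

Inductive ty : Type :=
| TR : ty
| TOne : ty
| TTensor : ty -> ty -> ty
| TPlus : ty -> ty -> ty
| TLolli : ty -> ty -> ty
| TWith : ty -> ty -> ty.

Definition pol_of (A : ty) : pol :=
  match A with
  | TR | TOne | TTensor _ _ | TPlus _ _ => Pos
  | TLolli _ _ | TWith _ _ => Neg
  end.

Inductive side : Type := S1 | S2.
Definition pick {X : Type} (i : side) (a b : X) : X :=
  match i with S1 => a | S2 => b end.

Definition var := nat.

(** * Syntax: expressions (t,u) and values (v,w).
    Constructors annotated ^+ are expressions, ^- are values. *)
Inductive expr : Type :=
| EV : value -> expr
| ELetP : var -> expr -> expr -> expr                  (* (let x^+ = t in u)^+ *)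
| ELetN : var -> value -> expr -> expr                 (* (let x^- = v in u)^+ *)
| EDTens : value -> var -> var -> expr -> expr
| EDUnit : value -> expr -> expr
| EDSum : value -> var -> expr -> var -> expr -> expr
| EApp : value -> value -> expr
| EProj : side -> value -> expr
with value : Type :=
| VLetP : var -> expr -> value -> value                (* (let x^+ = t in v)^- *)
| VLetN : var -> value -> value -> value               (* (let x^- = v in w)^- *)
| VDTens : value -> var -> var -> value -> value
| VDUnit : value -> value -> value
| VDSum : value -> var -> value -> var -> value -> value
| VApp : value -> value -> value
| VProj : side -> value -> value
| VVar : var -> value
| VNew : value
| VDelete : value
| VPair : value -> value -> value
| VUnit : value
| VInj : side -> value -> value
| VLam : var -> expr -> value
| VWith : expr -> expr -> value
| VRes : nat -> value.

Definition is_final_value (v : value) : Prop :=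
  match v with
  | VUnit | VPair _ _ | VInj _ _ | VRes _ | VWith _ _ | VLam _ _
  | VNew | VDelete => True
  | _ => False
  end.

(** * Substitution t[v1/x1, ..., vk/xk] (simultaneous).
    Binders shadow.  In well-typed commands only closed values are
    substituted, so this coincides with capture-avoiding substitution. *)
Definition sub := list (var * value).

Fixpoint lookup (σ : sub) (x : var) : option value :=
  match σ with
  | [] => None
  | (y, v) :: σ' => if Nat.eqb x y then Some v else lookup σ' x
  end.

Definition rm (x : var) (σ : sub) : sub :=
  filter (fun p => negb (Nat.eqb (fst p) x)) σ.

Fixpoint subst_e (σ : sub) (t : expr) : expr :=
  match t with
  | EV v => EV (subst_v σ v)
  | ELetP x t u => ELetP x (subst_e σ t) (subst_e (rm x σ) u)
  | ELetN x v u => ELetN x (subst_v σ v) (subst_e (rm x σ) u)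
  | EDTens v x y t => EDTens (subst_v σ v) x y (subst_e (rm y (rm x σ)) t)
  | EDUnit v t => EDUnit (subst_v σ v) (subst_e σ t)
  | EDSum v x t y u =>
      EDSum (subst_v σ v) x (subst_e (rm x σ) t) y (subst_e (rm y σ) u)
  | EApp v w => EApp (subst_v σ v) (subst_v σ w)
  | EProj i v => EProj i (subst_v σ v)
  end
with subst_v (σ : sub) (v : value) : value :=
  match v with
  | VLetP x t w => VLetP x (subst_e σ t) (subst_v (rm x σ) w)
  | VLetN x v w => VLetN x (subst_v σ v) (subst_v (rm x σ) w)
  | VDTens v x y w => VDTens (subst_v σ v) x y (subst_v (rm y (rm x σ)) w)
  | VDUnit v w => VDUnit (subst_v σ v) (subst_v σ w)
  | VDSum v x w y w' =>
      VDSum (subst_v σ v) x (subst_v (rm x σ) w) y (subst_v (rm y σ) w')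
  | VApp v w => VApp (subst_v σ v) (subst_v σ w)
  | VProj i v => VProj i (subst_v σ v)
  | VVar x => match lookup σ x with Some v => v | None => VVar x end
  | VNew => VNew
  | VDelete => VDelete
  | VPair v w => VPair (subst_v σ v) (subst_v σ w)
  | VUnit => VUnit
  | VInj i v => VInj i (subst_v σ v)
  | VLam x t => VLam x (subst_e (rm x σ) t)
  | VWith t u => VWith (subst_e σ t) (subst_e σ u)
  | VRes n => VRes n
  end.

Definition upd (ρ : var -> var) (x : var) : var -> var :=
  fun z => if Nat.eqb z x then z else ρ z.

Fixpoint rename_e (ρ : var -> var) (t : expr) : expr :=
  match t with
  | EV v => EV (rename_v ρ v)
  | ELetP x t u => ELetP x (rename_e ρ t) (rename_e (upd ρ x) u)
  | ELetN x v u => ELetN x (rename_v ρ v) (rename_e (upd ρ x) u)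
  | EDTens v x y t => EDTens (rename_v ρ v) x y (rename_e (upd (upd ρ x) y) t)
  | EDUnit v t => EDUnit (rename_v ρ v) (rename_e ρ t)
  | EDSum v x t y u =>
      EDSum (rename_v ρ v) x (rename_e (upd ρ x) t) y (rename_e (upd ρ y) u)
  | EApp v w => EApp (rename_v ρ v) (rename_v ρ w)
  | EProj i v => EProj i (rename_v ρ v)
  end
with rename_v (ρ : var -> var) (v : value) : value :=
  match v with
  | VLetP x t w => VLetP x (rename_e ρ t) (rename_v (upd ρ x) w)
  | VLetN x v w => VLetN x (rename_v ρ v) (rename_v (upd ρ x) w)
  | VDTens v x y w => VDTens (rename_v ρ v) x y (rename_v (upd (upd ρ x) y) w)
  | VDUnit v w => VDUnit (rename_v ρ v) (rename_v ρ w)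
  | VDSum v x w y w' =>
      VDSum (rename_v ρ v) x (rename_v (upd ρ x) w) y (rename_v (upd ρ y) w')
  | VApp v w => VApp (rename_v ρ v) (rename_v ρ w)
  | VProj i v => VProj i (rename_v ρ v)
  | VVar x => VVar (ρ x)
  | VNew => VNew
  | VDelete => VDelete
  | VPair v w => VPair (rename_v ρ v) (rename_v ρ w)
  | VUnit => VUnit
  | VInj i v => VInj i (rename_v ρ v)
  | VLam x t => VLam x (rename_e (upd ρ x) t)
  | VWith t u => VWith (rename_e ρ t) (rename_e ρ u)
  | VRes n => VRes n
  end.

(** bound variables (to state that a renaming is capture-free) *)
Fixpoint bv_e (t : expr) : list var :=
  match t with
  | EV v => bv_v v
  | ELetP x t u => x :: bv_e t ++ bv_e u
  | ELetN x v u => x :: bv_v v ++ bv_e u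
  | EDTens v x y t => x :: y :: bv_v v ++ bv_e t
  | EDUnit v t => bv_v v ++ bv_e t
  | EDSum v x t y u => x :: y :: bv_v v ++ bv_e t ++ bv_e u
  | EApp v w => bv_v v ++ bv_v w
  | EProj _ v => bv_v v
  end
with bv_v (v : value) : list var :=
  match v with
  | VLetP x t w => x :: bv_e t ++ bv_v w
  | VLetN x v w => x :: bv_v v ++ bv_v w
  | VDTens v x y w => x :: y :: bv_v v ++ bv_v w
  | VDUnit v w => bv_v v ++ bv_v w
  | VDSum v x w y w' => x :: y :: bv_v v ++ bv_v w ++ bv_v w'
  | VApp v w => bv_v v ++ bv_v w
  | VProj _ v => bv_v v
  | VVar _ | VNew | VDelete | VUnit | VRes _ => []
  | VPair v w => bv_v v ++ bv_v w
  | VInj _ v => bv_v v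
  | VLam x t => x :: bv_e t
  | VWith t u => bv_e t ++ bv_e u
  end.

Definition ctx := list (var * ty).
Definition ctx_ok (Γ : ctx) : Prop := NoDup (map fst Γ).
Definition rn_ctx (ρ : var -> var) (Γ : ctx) : ctx :=
  map (fun p => (ρ (fst p), snd p)) Γ.

(** When [st = true] the rule
    (struct) is available; when [st = false] we get the ordered fragment.
    Rules whose conclusion annotation is ϖ(B) are split according to ϖ(B)
    (expression for +, value for -), and the (let) rule also according to
    ϖ(A) (binder x^+ with an expression, or x^- with a value). *)
Inductive typ (st : bool) : ctx -> expr -> ty -> Prop :=
| T_var x A : typ st [(x, A)] (EV (VVar x)) A
| T_struct Γ Γ' t A (ρ : var -> var) :
    st = true ->
    typ st Γ t A ->
    Permutation (rn_ctx ρ Γ) Γ' -> ctx_ok Γ' ->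
    (forall x, In x (map fst Γ) -> ~ In (ρ x) (bv_e t)) ->
    typ st Γ' (rename_e ρ t) A
| T_new : typ st [] (EV VNew) (TLolli TOne (TPlus TR TOne))
| T_delete : typ st [] (EV VDelete) (TLolli TR TOne)
| T_res n : typ st [] (EV (VRes n)) TR
| T_let_pp Γ Δ x t u A B :
    pol_of A = Pos -> pol_of B = Pos ->
    typ st Δ t A -> typ st (Γ ++ [(x, A)]) u B -> ctx_ok (Γ ++ Δ) ->
    typ st (Γ ++ Δ) (ELetP x t u) B
| T_let_pn Γ Δ x t w A B :
    pol_of A = Pos -> pol_of B = Neg ->
    typ st Δ t A -> typ st (Γ ++ [(x, A)]) (EV w) B -> ctx_ok (Γ ++ Δ) ->
    typ st (Γ ++ Δ) (EV (VLetP x t w)) B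
| T_let_np Γ Δ x v u A B :
    pol_of A = Neg -> pol_of B = Pos ->
    typ st Δ (EV v) A -> typ st (Γ ++ [(x, A)]) u B -> ctx_ok (Γ ++ Δ) ->
    typ st (Γ ++ Δ) (ELetN x v u) B
| T_let_nn Γ Δ x v w A B :
    pol_of A = Neg -> pol_of B = Neg ->
    typ st Δ (EV v) A -> typ st (Γ ++ [(x, A)]) (EV w) B -> ctx_ok (Γ ++ Δ) ->
    typ st (Γ ++ Δ) (EV (VLetN x v w)) B
| T_pair Γ Δ v w A B :
    typ st Γ (EV v) A -> typ st Δ (EV w) B -> ctx_ok (Γ ++ Δ) ->
    typ st (Γ ++ Δ) (EV (VPair v w)) (TTensor A B)
| T_dtens_p Γ Δ Γ' v x y t A B C :
    pol_of C = Pos ->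
    typ st Δ (EV v) (TTensor A B) ->
    typ st (Γ ++ (x, A) :: (y, B) :: Γ') t C -> ctx_ok (Γ ++ Δ ++ Γ') ->
    typ st (Γ ++ Δ ++ Γ') (EDTens v x y t) C
| T_dtens_n Γ Δ Γ' v x y w A B C :
    pol_of C = Neg ->
    typ st Δ (EV v) (TTensor A B) ->
    typ st (Γ ++ (x, A) :: (y, B) :: Γ') (EV w) C -> ctx_ok (Γ ++ Δ ++ Γ') ->
    typ st (Γ ++ Δ ++ Γ') (EV (VDTens v x y w)) C
| T_unit : typ st [] (EV VUnit) TOne
| T_dunit_p Γ Δ Γ' v t A :
    pol_of A = Pos ->
    typ st Δ (EV v) TOne -> typ st (Γ ++ Γ') t A -> ctx_ok (Γ ++ Δ ++ Γ') ->
    typ st (Γ ++ Δ ++ Γ') (EDUnit v t) A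
| T_dunit_n Γ Δ Γ' v w A :
    pol_of A = Neg ->
    typ st Δ (EV v) TOne -> typ st (Γ ++ Γ') (EV w) A -> ctx_ok (Γ ++ Δ ++ Γ') ->
    typ st (Γ ++ Δ ++ Γ') (EV (VDUnit v w)) A
| T_inj1 Γ v A B : typ st Γ (EV v) A -> typ st Γ (EV (VInj S1 v)) (TPlus A B)
| T_inj2 Γ v A B : typ st Γ (EV v) B -> typ st Γ (EV (VInj S2 v)) (TPlus A B)
| T_dsum_p Γ Δ Γ' v x t y u A B C :
    pol_of C = Pos ->
    typ st Δ (EV v) (TPlus A B) ->
    typ st (Γ ++ (x, A) :: Γ') t C -> typ st (Γ ++ (y, B) :: Γ') u C ->
    ctx_ok (Γ ++ Δ ++ Γ') ->
    typ st (Γ ++ Δ ++ Γ') (EDSum v x t y u) C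
| T_dsum_n Γ Δ Γ' v x w y w' A B C :
    pol_of C = Neg ->
    typ st Δ (EV v) (TPlus A B) ->
    typ st (Γ ++ (x, A) :: Γ') (EV w) C -> typ st (Γ ++ (y, B) :: Γ') (EV w') C ->
    ctx_ok (Γ ++ Δ ++ Γ') ->
    typ st (Γ ++ Δ ++ Γ') (EV (VDSum v x w y w')) C
| T_lam Γ x t A B :
    typ st ((x, A) :: Γ) t B -> typ st Γ (EV (VLam x t)) (TLolli A B)
| T_app_p Γ Δ v w A B :
    pol_of B = Pos ->
    typ st Γ (EV w) A -> typ st Δ (EV v) (TLolli A B) -> ctx_ok (Γ ++ Δ) ->
    typ st (Γ ++ Δ) (EApp v w) B
| T_app_n Γ Δ v w A B :
    pol_of B = Neg ->
    typ st Γ (EV w) A -> typ st Δ (EV v) (TLolli A B) -> ctx_ok (Γ ++ Δ) ->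
    typ st (Γ ++ Δ) (EV (VApp v w)) B
| T_with Γ t u A B :
    typ st Γ t A -> typ st Γ u B -> typ st Γ (EV (VWith t u)) (TWith A B)
| T_proj_p Γ i v A1 A2 :
    pol_of (pick i A1 A2) = Pos ->
    typ st Γ (EV v) (TWith A1 A2) -> typ st Γ (EProj i v) (pick i A1 A2)
| T_proj_n Γ i v A1 A2 :
    pol_of (pick i A1 A2) = Neg ->
    typ st Γ (EV v) (TWith A1 A2) -> typ st Γ (EV (VProj i v)) (pick i A1 A2).

Inductive stack : Type :=
| SNil : stack
| SArg : value -> pol -> stack -> stack
| SProj : side -> pol -> stack -> stack
| SBind : var -> expr -> pol -> stack -> stack.

(** resource lists l ::= [] | r_n :: l, r_n represented by n *)
Definition rlist := list nat.

Record cmd : Type := Cmd { c_term : expr; c_stack : stack; c_list : rlist; c_pol : pol }.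

Inductive styp (st : bool) : stack -> ty -> ty -> Prop :=
| S_nil A : styp st SNil A A
| S_arg v e s A B C :
    styp st s B C -> e = pol_of B -> typ st [] (EV v) A ->
    styp st (SArg v e s) (TLolli A B) C
| S_bind x t e s A B C :
    styp st s B C -> e = pol_of B ->
    pol_of A = Pos ->
    typ st [(x, A)] t B ->
    styp st (SBind x t e s) A C
| S_proj i e s A1 A2 C :
    styp st s (pick i A1 A2) C -> e = pol_of (pick i A1 A2) ->
    styp st (SProj i e s) (TWith A1 A2) C.

Definition cmd_typed (st : bool) (c : cmd) (A : ty) : Prop :=
  exists B, pol_of B = c_pol c /\ typ st [] (c_term c) B /\ styp st (c_stack c) B A.

Inductive red : cmd -> cmd -> Prop :=
| R_letN_p x v u s l :
    red (Cmd (ELetN x v u) s l Pos) (Cmd (subst_e [(x, v)] u) s l Pos)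
| R_letN_n x v w s l :
    red (Cmd (EV (VLetN x v w)) s l Neg) (Cmd (EV (subst_v [(x, v)] w)) s l Neg)
| R_letP_p x t u s l :
    red (Cmd (ELetP x t u) s l Pos) (Cmd t (SBind x u Pos s) l Pos)
| R_letP_n x t w s l :
    red (Cmd (EV (VLetP x t w)) s l Neg) (Cmd t (SBind x (EV w) Neg s) l Pos)
| R_bind v x t e s l :
    red (Cmd (EV v) (SBind x t e s) l Pos) (Cmd (subst_e [(x, v)] t) s l e)
| R_app_p v w s l :
    red (Cmd (EApp v w) s l Pos) (Cmd (EV v) (SArg w Pos s) l Neg)
| R_app_n v w s l :
    red (Cmd (EV (VApp v w)) s l Neg) (Cmd (EV v) (SArg w Neg s) l Neg)
| R_lam x t v e s l :
    red (Cmd (EV (VLam x t)) (SArg v e s) l Neg) (Cmd (subst_e [(x, v)] t) s l e)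
| R_proj_p i v s l :
    red (Cmd (EProj i v) s l Pos) (Cmd (EV v) (SProj i Pos s) l Neg)
| R_proj_n i v s l :
    red (Cmd (EV (VProj i v)) s l Neg) (Cmd (EV v) (SProj i Neg s) l Neg)
| R_with i t1 t2 e s l :
    red (Cmd (EV (VWith t1 t2)) (SProj i e s) l Neg) (Cmd (pick i t1 t2) s l e)
| R_dtens_p v w x y t s l :
    red (Cmd (EDTens (VPair v w) x y t) s l Pos)
        (Cmd (subst_e [(x, v); (y, w)] t) s l Pos)
| R_dtens_n v w x y w' s l :
    red (Cmd (EV (VDTens (VPair v w) x y w')) s l Neg)
        (Cmd (EV (subst_v [(x, v); (y, w)] w')) s l Neg)
| R_dunit_p t s l :
    red (Cmd (EDUnit VUnit t) s l Pos) (Cmd t s l Pos)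
| R_dunit_n w s l :
    red (Cmd (EV (VDUnit VUnit w)) s l Neg) (Cmd (EV w) s l Neg)
| R_dsum_p i v x1 t1 x2 t2 s l :
    red (Cmd (EDSum (VInj i v) x1 t1 x2 t2) s l Pos)
        (Cmd (subst_e [(pick i x1 x2, v)] (pick i t1 t2)) s l Pos)
| R_dsum_n i v x1 w1 x2 w2 s l :
    red (Cmd (EV (VDSum (VInj i v) x1 w1 x2 w2)) s l Neg)
        (Cmd (EV (subst_v [(pick i x1 x2, v)] (pick i w1 w2))) s l Neg)
| R_new_some e s n l :
    red (Cmd (EV VNew) (SArg VUnit e s) (n :: l) Neg)
        (Cmd (EV (VInj S1 (VRes n))) s l Pos)
| R_new_none e s :
    red (Cmd (EV VNew) (SArg VUnit e s) [] Neg)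
        (Cmd (EV (VInj S2 VUnit)) s [] Pos)
| R_delete n e s l :
    red (Cmd (EV VDelete) (SArg (VRes n) e s) l Neg)
        (Cmd (EV VUnit) s (n :: l) Pos).

Definition final_cmd (c : cmd) : Prop :=
  exists v l e, is_final_value v /\ c = Cmd (EV v) SNil l e.

(* Main.v *)
Require Import Defs.
From Stdlib Require Import List Arith Permutation.
Import ListNotations.

Definition good_v (v : value) (B : ty) : Prop :=
  match v with
  | VLetP _ _ _ | VLetN _ _ _ | VApp _ _ | VProj _ _ => pol_of B = Neg
  | VDTens v' _ _ _ => pol_of B = Neg /\ exists a b, v' = VPair a b
  | VDUnit v' _ => pol_of B = Neg /\ v' = VUnit
  | VDSum v' _ _ _ _ => pol_of B = Neg /\ exists i a, v' = VInj i a
  | VVar _ => False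
  | VNew => exists C, B = TLolli TOne C
  | VDelete => exists C, B = TLolli TR C
  | VPair _ _ => exists A C, B = TTensor A C
  | VUnit => B = TOne
  | VInj _ _ => exists A C, B = TPlus A C
  | VLam _ _ => exists A C, B = TLolli A C
  | VWith _ _ => exists A C, B = TWith A C
  | VRes _ => B = TR
  end.

Definition good (t : expr) (B : ty) : Prop :=
  match t with
  | EV v => good_v v B
  | ELetP _ _ _ | ELetN _ _ _ | EApp _ _ | EProj _ _ => pol_of B = Pos
  | EDTens v _ _ _ => pol_of B = Pos /\ exists a b, v = VPair a b
  | EDUnit v _ => pol_of B = Pos /\ v = VUnit
  | EDSum v _ _ _ _ => pol_of B = Pos /\ exists i a, v = VInj i a
  end.

Lemma good_rename ρ t B : good t B -> good (rename_e ρ t) B.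
Proof.
  destruct t; simpl; auto.
  - destruct v; simpl; auto.
    + intros [H1 [a [b E]]]; subst; simpl; eauto.
    + intros [H1 E]; subst; simpl; eauto.
    + intros [H1 [a [b E]]]; subst; simpl; eauto.

  - intros [H1 [a [b E]]]; subst; simpl; eauto.
  - intros [H1 E]; subst; simpl; eauto.
  - intros [H1 [a [b E]]]; subst; simpl; eauto.
Qed.

Lemma canon_tensor v A B : good_v v (TTensor A B) -> exists a b, v = VPair a b.
Proof. destruct v; simpl; intros H; try discriminate; try tauto;
  try (destruct H as [? [? ?]]; discriminate); try (destruct H; discriminate); eauto. Qed.
Lemma canon_one v : good_v v TOne -> v = VUnit.
Proof. destruct v; simpl; intros H; try discriminate; try tauto;
  try (destruct H as [? [? ?]]; discriminate); try (destruct H; discriminate); eauto. Qed.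
Lemma canon_plus v A B : good_v v (TPlus A B) -> exists i a, v = VInj i a.
Proof. destruct v; simpl; intros H; try discriminate; try tauto;
  try (destruct H as [? [? ?]]; discriminate); try (destruct H; discriminate); eauto. Qed.
Lemma canon_r v : good_v v TR -> exists n, v = VRes n.
Proof. destruct v; simpl; intros H; try discriminate; try tauto;
  try (destruct H as [? [? ?]]; discriminate); try (destruct H; discriminate); eauto. Qed.

Lemma typ_good st G t B : typ st G t B -> G = [] -> good t B.
Proof.
  induction 1; intros HG; simpl; eauto; try discriminate.
  - subst. apply good_rename. apply IHtyp.
    apply Permutation_sym in H1. apply Permutation_nil in H1.
    unfold rn_ctx in H1. destruct Γ; [reflexivity| discriminate].
  - split; [assumption|]. apply app_eq_nil in HG as [_ HG]. apply app_eq_nil in HG as [HG _].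
    apply canon_tensor with A B. apply (IHtyp1 HG).
  - split; [assumption|]. apply app_eq_nil in HG as [_ HG]. apply app_eq_nil in HG as [HG _].
    apply canon_tensor with A B. apply (IHtyp1 HG).
  - split; [assumption|]. apply app_eq_nil in HG as [_ HG]. apply app_eq_nil in HG as [HG _].
    apply canon_one. apply (IHtyp1 HG).
  - split; [assumption|]. apply app_eq_nil in HG as [_ HG]. apply app_eq_nil in HG as [HG _].
    apply canon_one. apply (IHtyp1 HG).
  - split; [assumption|]. apply app_eq_nil in HG as [_ HG]. apply app_eq_nil in HG as [HG _].
    apply canon_plus with A B. apply (IHtyp1 HG).
  - split; [assumption|]. apply app_eq_nil in HG as [_ HG]. apply app_eq_nil in HG as [HG _].
    apply canon_plus with A B. apply (IHtyp1 HG).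
Qed.

Lemma not_red_final c c' : red c c' -> ~ final_cmd c.
Proof.
  intros R [v [l [e [F E]]]]; subst; inversion R; subst; simpl in F; auto.
Qed.

Theorem theorem3 (st : bool) (c : cmd) (A : ty) :
  cmd_typed st c A -> ((exists c', red c c') <-> ~ final_cmd c).
Proof.
  intros [B [Hp [Ht Hs]]].
  split.
  - intros [c' R]. exact (not_red_final _ _ R).
  - intros NF. destruct c as [t s l e]; simpl in *. subst e.
    pose proof (typ_good _ _ _ _ Ht eq_refl) as G.
    destruct t; simpl in G.
    + destruct s as [| w e' s' | i e' s' | x u e' s'].
      * destruct v; simpl in G;
          try (exfalso; apply NF; unfold final_cmd; do 3 eexists; split; [|reflexivity]; simpl; exact I);
          try (rewrite G; eexists; constructor);
          try (destruct G as [G1 [a [b E]]]; subst; rewrite G1; eexists; constructor);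
          try (destruct G as [G1 E]; subst; rewrite G1; eexists; constructor);
          try contradiction.
      * inversion Hs; subst; simpl.
        destruct v; simpl in G;
          try (eexists; constructor; fail);
          try (destruct G as [_ [a [b E]]]; subst; eexists; constructor; fail);
          try (destruct G as [_ E]; subst; eexists; constructor; fail);
          try contradiction;
          try (destruct G as [? [? E]]; discriminate);
          try (destruct G as [? E]; discriminate);
          try discriminate.
        -- destruct G as [? E]; injection E; intros; subst.
           pose proof (canon_one w (typ_good _ _ (EV w) _ ltac:(eassumption) eq_refl)).
           subst. destruct l; eexists; constructor.
        -- destruct G as [? E]; injection E; intros; subst.
           destruct (canon_r w (typ_good _ _ (EV w) _ ltac:(eassumption) eq_refl)) as [n En].
           subst. eexists; constructor.
      * inversion Hs; subst; simpl.
        destruct v; simpl in G;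
          try (eexists; constructor; fail);
          try (destruct G as [_ [a [b E]]]; subst; eexists; constructor; fail);
          try (destruct G as [_ E]; subst; eexists; constructor; fail);
          try contradiction;
          try (destruct G as [? [? E]]; discriminate);
          try (destruct G as [? E]; discriminate);
          try discriminate.
      * inversion Hs; subst. match goal with H: pol_of _ = Pos |- _ => rewrite H end. eexists; constructor.
    + rewrite G; eexists; constructor.
    + rewrite G; eexists; constructor.
    + destruct G as [G1 [a [b E]]]; subst; rewrite G1; eexists; constructor.
    + destruct G as [G1 E]; subst; rewrite G1; eexists; constructor.
    + destruct G as [G1 [a [b E]]]; subst; rewrite G1; eexists; constructor.
    + rewrite G; eexists; constructor.
    + rewrite G; eexists; constructor.
Qed.
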